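(* Fix $X_2=x_2.E_2$ with $x_2\in U$, $E_2\in\mathfrak g$, and fix $E_1\in\mathfrak g$. Define, as functions of $x_1$, $\mathcal D_0(x_1;X_2)=\frac{M(X_2)}{(x_1-x_2)^2}$ and $\mathcal D_{k+1}(x_1;X_2)=\frac{d}{dx_1}\mathcal D_k(x_1;X_2)+[\mathcal D_k(x_1;X_2),\mathcal D(x_1)]$. Then there exist coefficients $\alpha_k(x_1;X_2)$, $k=0,\dots,\dim\mathfrak g$, each a polynomial in $x_1$ (with coefficients depending on $X_2$), not all zero, such that $\sum_{k=0}^{\dim\mathfrak g}\alpha_k(x_1;X_2)\mathcal D_k(x_1;X_2)=0$ and $$\sum_{k=0}^{\dim\mathfrak g}\alpha_k(x_1;X_2)\frac{d^k}{dx_1^k}W_2(x_1.E_1,X_2)=0$$ for $x_1\in U\setminus\{x_2\}$.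
   Context: Let $G\subset GL(r,\mathbb C)$ be a complex reductive Lie group given in a faithful matrix representation, with Lie algebra $\mathfrak g\subset\mathfrak{gl}(r,\mathbb C)$; ${\rm Tr}$ denotes the matrix trace. Let $\mathcal D(x)$ be an $r\times r$ matrix with rational entries in $x$, $\mathcal D(x)\in\mathfrak g$. Let $\Psi(x)$ be a holomorphic $G$-valued solution of $\frac{d}{dx}\Psi=\mathcal D\Psi$ on a simply connected domain $U\subset\mathbb C$ avoiding the poles of $\mathcal D$. For $x\in U$, $E\in\mathfrak g$, write $x.E$ for the pair and $M(x.E)=\Psi(x)E\Psi(x)^{-1}$. For $X_i=x_i.E_i$ with $x_1\ne x_2$ define $W_2(X_1,X_2)=\frac{1}{(x_1-x_2)^2}{\rm Tr}\,M(X_1)M(X_2)$. *)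

(* Defs.v *)
(* Complex numbers are R[i] for a
   realType R (i.e. a model of the reals), viewed as a numClosedFieldType so
   that MathComp-Analysis gives it its (modulus) norm and topology; complex
   derivatives are the MathComp-Analysis derivatives 'D_1 / derive1 / derive1n
   over this field. *)
From HB Require Import structures.
From mathcomp Require Import all_boot all_order all_algebra.
From mathcomp Require Import all_classical all_reals all_analysis.
From mathcomp Require Import complex.
Set Implicit Arguments.
Unset Strict Implicit.
Unset Printing Implicit Defensive.
Import Order.TTheory GRing.Theory Num.Theory.
Import numFieldNormedType.Exports.
Local Open Scope classical_set_scope.
Local Open Scope ring_scope.

Definition Cplx (R : realType) : numClosedFieldType := R[i].

Section Defs.
Variable R : realType.
Local Notation C := (Cplx R).
Variable r : nat.

Definition mxexp (A : 'M[C]_r) : 'M[C]_r :=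
  limn (series (fun k : nat => (k`!%:R)^-1 *: A ^+ k)).

Definition closed_matrix_group (G : set 'M[C]_r) : Prop :=
  [/\ G 1%:M,
      (forall A, G A -> A \in unitmx),
      (forall A B, G A -> G B -> G (A *m B)),
      (forall A, G A -> G (invmx A)) &
      (forall A, A \in unitmx -> closure G A -> G A)].

Definition lie_algebra (G : set 'M[C]_r) : set 'M[C]_r :=
  [set X | forall t : C, G (mxexp (t *: X))].

(* G is reductive: the defining representation on C^r is completely
   reducible (every G-stable subspace has a G-stable complement).  Subspaces
   of column vectors are encoded as row spaces of transposes. *)
Definition mx_stable (G : set 'M[C]_r) (U : 'M[C]_r) : Prop :=
  forall A, G A -> (U *m A^T <= U)%MS.
Definition reductive (G : set 'M[C]_r) : Prop :=
  forall U : 'M[C]_r, mx_stable G U ->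
    exists W : 'M[C]_r, [/\ mx_stable G W, (U + W == 1%:M)%MS & mxdirect (U + W)].

Definition complex_reductive_matrix_group (G : set 'M[C]_r) : Prop :=
  closed_matrix_group G /\ reductive G.

Definition lie_dim (G : set 'M[C]_r) (n : nat) : Prop :=
  exists B : 'M[C]_(n, r * r), row_free B /\
    forall X : 'M[C]_r, lie_algebra G X <-> (mxvec X <= B)%MS.

Definition ratmx (P : 'M[{poly C}]_r) (q : {poly C}) (x : C) : 'M[C]_r :=
  (q.[x])^-1 *: map_mx (fun p => p.[x]) P.

Definition lie_bracket (A B : 'M[C]_r) : 'M[C]_r := A *m B - B *m A.

Definition Mop (Psi : C -> 'M[C]_r) (x : C) (E : 'M[C]_r) : 'M[C]_r :=
  Psi x *m E *m invmx (Psi x).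

Definition W2 (Psi : C -> 'M[C]_r) (x1 : C) (E1 : 'M[C]_r) (x2 : C)
    (E2 : 'M[C]_r) : C :=
  \tr (Mop Psi x1 E1 *m Mop Psi x2 E2) / (x1 - x2) ^+ 2.

Fixpoint Dk (D : C -> 'M[C]_r) (Psi : C -> 'M[C]_r) (x2 : C) (E2 : 'M[C]_r)
    (k : nat) : C -> 'M[C]_r :=
  match k with
  | 0 => fun x1 => ((x1 - x2) ^+ 2)^-1 *: Mop Psi x2 E2
  | k'.+1 => fun x1 => derive1 (Dk D Psi x2 E2 k') x1
                       + lie_bracket (Dk D Psi x2 E2 k' x1) (D x1)
  end.

End Defs.

Definition simply_connected_domain (R : realType) (U : set (Cplx R)) : Prop :=
  [/\ open U, connected U &
    forall g : R -> Cplx R,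
      {within `[0, 1]%classic, continuous g} ->
      (forall t, t \in `[0, 1]%R -> U (g t)) -> g 0 = g 1 ->
      exists H : R * R -> Cplx R,
        [/\ {within [set p | p.1 \in `[0, 1]%R /\ p.2 \in `[0, 1]%R],
               continuous H},
            (forall s t, s \in `[0, 1]%R -> t \in `[0, 1]%R -> U (H (s, t))),
            (forall t, t \in `[0, 1]%R -> H (0, t) = g t),
            (forall t, t \in `[0, 1]%R -> H (1, t) = g 0) &
            (forall s, s \in `[0, 1]%R -> H (s, 0) = g 0 /\ H (s, 1) = g 0)]].

(* Main.v *)
Require Import Defs.
From HB Require Import structures.
From mathcomp Require Import all_boot all_order all_algebra.
From mathcomp Require Import all_classical all_reals all_analysis.
From mathcomp Require Import complex.
From mathcomp Require Import ring.
Import Order.TTheory GRing.Theory Num.Theory.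
Import numFieldNormedType.Exports.
Local Open Scope classical_set_scope.
Local Open Scope ring_scope.
Set Implicit Arguments.
Unset Strict Implicit.
Unset Printing Implicit Defensive.
Section mxcvg.
Context {K : numFieldType} {m n : nat}.

Lemma cvg_mxP {T : Type} (F : set_system T) {FF : Filter F}
  (f : T -> 'M[K]_(m, n)) (L : 'M[K]_(m, n)) :
  f @ F --> L <-> forall i j, (fun x => f x i j) @ F --> L i j.
Proof.
split=> [fL i j|H].
  exact: (continuous_cvg _ (@coord_continuous K m n i j L) fL).
apply/cvg_mx_entourageP => A entA.
have H2 : forall i j, \forall x \near F, A (L i j, f x i j).
  by move=> i j; have /cvg_app_entourageP := H i j; apply.
near=> x => i j; rewrite inE.
move: i j; near: x.
apply: filter_forall => i; apply: filter_forall => j; exact: H2.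
Unshelve. all: by end_near. Qed.

Context {V : normedModType K}.
Implicit Types M : V -> 'M[K]_(m, n).

Lemma derivable_mxP' M t v :
  derivable M t v <-> forall i j, derivable (fun x => M x i j) t v.
Proof.
rewrite /derivable; split=> [/cvg_ex[/= l Hl] i j|H].
  apply/cvg_ex; exists (l i j).
  move/cvg_mxP : Hl => /(_ i j) /=.
  by apply: cvg_trans; apply: near_eq_cvg; near=> h; rewrite !mxE.
apply/cvg_ex => /=.
exists (\matrix_(i < m, j < n) lim ((fun h : K => h^-1 *: (M (h *: v + t) i j - M t i j)) @ 0^')).
apply/cvg_mxP => i j; rewrite mxE.
have := H i j; rewrite /= => Hij.
apply: cvg_trans Hij; apply: near_eq_cvg; near=> h; rewrite !mxE //.
Unshelve. all: by end_near. Qed.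

Lemma derive_mx' M t v :
  derivable M t v ->
  'D_v M t = \matrix_(i < m, j < n) 'D_v (fun t => M t i j) t.
Proof.
move=> dM; have := dM; rewrite /derivable => /cvg_ex[/= l Hl].
rewrite /derive (cvg_lim _ Hl) //; apply/matrixP => i j; rewrite mxE.
apply/esym/cvg_lim => //.
move/cvg_mxP : Hl => /(_ i j) /=.
by apply: cvg_trans; apply: near_eq_cvg; near=> h; rewrite !mxE.
Unshelve. all: by end_near. Qed.
End mxcvg.
Section mxder.
Context {K : numFieldType}.

Lemma is_derive_mulr (f g : K -> K) (x df dg : K) :
  is_derive x 1 f df -> is_derive x 1 g dg ->
  is_derive x 1 (fun y => f y * g y) (f x * dg + g x * df).
Proof. move=> Hf Hg; exact: (is_deriveM Hf Hg). Qed.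

Lemma is_derive_sumr n (h : 'I_n -> K -> K) (x : K) (dh : 'I_n -> K) :
  (forall i, is_derive x 1 (h i) (dh i)) ->
  is_derive x 1 (fun y => \sum_(i < n) h i y) (\sum_(i < n) dh i).
Proof.
move=> H; have := is_derive_sum H.
by rewrite (_ : \sum_(i < n) h i = (fun y => \sum_(i < n) h i y)) // fct_sumE.
Qed.

Lemma is_derive_mxP {m n : nat} (f : K -> 'M[K]_(m, n)) (x : K) (df : 'M[K]_(m, n)) :
  (forall i j, is_derive x 1 (fun y => f y i j) (df i j)) ->
  is_derive x 1 f df.
Proof.
move=> H; have dF : derivable f x 1.
  by apply/derivable_mxP' => i j; exact: ex_derive.
apply: DeriveDef => //; rewrite derive_mx' //; apply/matrixP => i j.
by rewrite mxE derive_val.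
Qed.

Lemma is_derive_mx_entry {m n : nat} (f : K -> 'M[K]_(m, n)) (x : K) (df : 'M[K]_(m, n)) i j :
  is_derive x 1 f df -> is_derive x 1 (fun y => f y i j) (df i j).
Proof.
move=> H; have dF : derivable f x 1 by exact: ex_derive.
have := dF; rewrite derivable_mxP' => /(_ i j) dij.
apply: DeriveDef => //.
by rewrite -(@derive_val _ _ _ _ _ _ _ H) derive_mx' // mxE.
Qed.

Lemma is_derive_mulmx {m n p : nat} (f : K -> 'M[K]_(m, n)) (g : K -> 'M[K]_(n, p)) (x : K) df dg :
  is_derive x 1 f df -> is_derive x 1 g dg ->
  is_derive x 1 (fun y => f y *m g y) (df *m g x + f x *m dg).
Proof.
move=> Hf Hg; apply: is_derive_mxP => i j.
rewrite (_ : (fun y => (f y *m g y) i j) = fun y => \sum_k f y i k * g y k j); last first.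
  by apply/funext => y; rewrite mxE.
rewrite !mxE -big_split /=.
apply: is_derive_sumr => k.
have H := is_derive_mulr (is_derive_mx_entry i k Hf) (is_derive_mx_entry k j Hg).
by rewrite addrC [df i k * _]mulrC.
Qed.

Lemma is_derive_scalemx {m n : nat} (c : K -> K) (f : K -> 'M[K]_(m, n)) (x dc : K) df :
  is_derive x 1 c dc -> is_derive x 1 f df ->
  is_derive x 1 (fun y => c y *: f y) (dc *: f x + c x *: df).
Proof.
move=> Hc Hf; apply: is_derive_mxP => i j.
rewrite (_ : (fun y => (c y *: f y) i j) = fun y => c y * f y i j); last first.
  by apply/funext => y; rewrite mxE.
rewrite !mxE addrC [dc * _]mulrC.
apply: is_derive_mulr => //; exact: is_derive_mx_entry.
Qed.

Lemma is_derive_addf {W : normedModType K} (f g : K -> W) (x : K) df dg :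
  is_derive x 1 f df -> is_derive x 1 g dg ->
  is_derive x 1 (fun y => f y + g y) (df + dg).
Proof. move=> Hf Hg; exact: (is_deriveD Hf Hg). Qed.

Lemma is_derive_oppf {W : normedModType K} (f : K -> W) (x : K) df :
  is_derive x 1 f df -> is_derive x 1 (fun y => - f y) (- df).
Proof. move=> Hf; exact: (is_deriveN Hf). Qed.

Lemma is_derive_invf (f : K -> K) (x df : K) : f x != 0 ->
  is_derive x 1 f df -> is_derive x 1 (fun y => (f y)^-1) (- (f x) ^- 2 * df).
Proof.
move=> fx0 Hf; have dF : derivable f x 1 by exact: ex_derive.
have dV := derivableV fx0 dF; apply: DeriveDef => //.
by rewrite deriveV // derive_val.
Qed.
End mxder.
Section ratfun.
Context {K : numFieldType}.

Lemma near_neq (y x2 : K) : y != x2 -> \forall z \near y, z != x2.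
Proof.
move=> yx; apply/nbhs_ballP; exists `|y - x2|; first by rewrite /= normr_gt0 subr_eq0.
move=> z; rewrite /ball /= => H; apply/eqP => zx; move: H; rewrite zx ltxx.
by [].
Qed.

Lemma is_derive_horner (p : {poly K}) (x : K) :
  is_derive x 1 (fun y => p.[y]) (p^`()).[x].
Proof.
elim/poly_ind: p => [|p c IH].
  rewrite deriv0 horner0 (_ : (fun y => _) = cst 0); last by apply/funext => y; rewrite horner0.
  exact: is_derive_cst.
rewrite derivMXaddC.
rewrite (_ : (fun y => _) = fun y => p.[y] * y + c); last first.
  by apply/funext => y; rewrite hornerMXaddC.
have H1 : is_derive x 1 (fun y : K => y) 1 by exact: is_derive_id.
have H2 := is_derive_mulr IH H1.
have H3 := is_derive_addf H2 (is_derive_cst c x 1).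
rewrite hornerD hornerM hornerX.
by move: H3; rewrite addr0 mulr1 mulrC.
Qed.

Definition ev {m n} (y : K) (P : 'M[{poly K}]_(m, n)) : 'M[K]_(m, n) :=
  map_mx (fun p => p.[y]) P.

Definition rat_at {m n} (P : 'M[{poly K}]_(m, n)) (d : {poly K}) (y : K) :=
  (d.[y])^-1 *: ev y P.

Definition ratder {m n} (P : 'M[{poly K}]_(m, n)) (d : {poly K}) :=
  d *: map_mx deriv P - d^`() *: P.

Lemma is_derive_ev {m n} (P : 'M[{poly K}]_(m, n)) (x : K) :
  is_derive x 1 (fun y => ev y P) (ev x (map_mx deriv P)).
Proof.
apply: is_derive_mxP => i j.
rewrite (_ : (fun y => _) = fun y => (P i j).[y]); last by apply/funext => y; rewrite mxE.
by rewrite !mxE; exact: is_derive_horner.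
Qed.

Lemma is_derive_rat {m n} (P : 'M[{poly K}]_(m, n)) d (x : K) : d.[x] != 0 ->
  is_derive x 1 (rat_at P d) (rat_at (ratder P d) (d * d) x).
Proof.
move=> dx.
have H := is_derive_scalemx (is_derive_invf dx (is_derive_horner d x)) (is_derive_ev P x).
rewrite /rat_at.
have -> : (fun y => (d.[y])^-1 *: ev y P) = rat_at P d by [].
move: H; congr is_derive.
apply/matrixP => i j; rewrite /ratder /ev !mxE.
rewrite !(hornerE, mxE).
by field.
Qed.
End ratfun.
Section repr.
Context {K : numFieldType}.
Variable V : set K.
Hypothesis Vop : forall y, V y -> \forall z \near y, V z.

Definition repr {m n} (f : K -> 'M[K]_(m, n)) :=
  exists P d, (forall y, V y -> d.[y] != 0) /\ forall y, V y -> f y = rat_at P d y.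

Lemma ev_mul {m n p} (y : K) (P : 'M[{poly K}]_(m, n)) (Q : 'M[{poly K}]_(n, p)) :
  ev y (P *m Q) = ev y P *m ev y Q.
Proof.
apply/matrixP => i j; rewrite /ev !mxE horner_sum; apply: eq_bigr => k _.
by rewrite !mxE hornerM.
Qed.

Lemma ev_add {m n} (y : K) (P Q : 'M[{poly K}]_(m, n)) : ev y (P + Q) = ev y P + ev y Q.
Proof. by apply/matrixP => i j; rewrite /ev !mxE hornerD. Qed.

Lemma ev_opp {m n} (y : K) (P : 'M[{poly K}]_(m, n)) : ev y (- P) = - ev y P.
Proof. by apply/matrixP => i j; rewrite /ev !mxE hornerN. Qed.

Lemma ev_scale {m n} (y : K) c (P : 'M[{poly K}]_(m, n)) : ev y (c *: P) = c.[y] *: ev y P.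
Proof. by apply/matrixP => i j; rewrite /ev !mxE hornerM. Qed.

Lemma ev_C {m n} (y : K) (M : 'M[K]_(m, n)) : ev y (map_mx polyC M) = M.
Proof. by apply/matrixP => i j; rewrite /ev !mxE hornerC. Qed.

Lemma repr_is_derive {m n} (f : K -> 'M[K]_(m, n)) :
  repr f -> forall y, V y -> is_derive y 1 f (derive1 f y).
Proof.
move=> [P [d [dV fE]]] y Vy.
have H := is_derive_rat P (dV y Vy).
have Hn : \near y, rat_at P d y = f y.
  by near=> z; rewrite fE //; near: z; exact: Vop.
have H' := near_eq_is_derive Hn H.
by rewrite derive1E; rewrite derive_val.
Unshelve. all: by end_near. Qed.

Lemma repr_derive {m n} (f : K -> 'M[K]_(m, n)) : repr f -> repr (derive1 f).
Proof.
move=> rf; have [P [d [dV fE]]] := rf.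
exists (ratder P d), (d * d); split.
  by move=> y Vy; rewrite hornerM mulf_neq0 // dV.
move=> y Vy.
have H := is_derive_rat P (dV y Vy).
have Hn : \near y, rat_at P d y = f y.
  by near=> z; rewrite fE //; near: z; exact: Vop.
have H' := near_eq_is_derive Hn H.
by rewrite derive1E derive_val.
Unshelve. all: by end_near. Qed.

Lemma repr_add {m n} (f g : K -> 'M[K]_(m, n)) : repr f -> repr g -> repr (fun y => f y + g y).
Proof.
move=> [P [d [dV fE]]] [Q [e [eV gE]]].
exists (e *: P + d *: Q), (d * e); split.
  by move=> y Vy; rewrite hornerM mulf_neq0 ?dV ?eV.
move=> y Vy; rewrite fE // gE // /rat_at ev_add !ev_scale hornerM.
have := dV y Vy; have := eV y Vy; move: (d.[y]) (e.[y]) => a b b0 a0.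
rewrite scalerDr !scalerA; congr (_ *: _ + _ *: _); field; by rewrite a0 b0.
Qed.

Lemma repr_opp {m n} (f : K -> 'M[K]_(m, n)) : repr f -> repr (fun y => - f y).
Proof.
move=> [P [d [dV fE]]]; exists (- P), d; split => // y Vy.
by rewrite fE // /rat_at ev_opp scalerN.
Qed.

Lemma repr_mul {m n p} (f : K -> 'M[K]_(m, n)) (g : K -> 'M[K]_(n, p)) :
  repr f -> repr g -> repr (fun y => f y *m g y).
Proof.
move=> [P [d [dV fE]]] [Q [e [eV gE]]].
exists (P *m Q), (d * e); split.
  by move=> y Vy; rewrite hornerM mulf_neq0 ?dV ?eV.
move=> y Vy; rewrite fE // gE // /rat_at ev_mul hornerM.
by rewrite -scalemxAl -scalemxAr scalerA invfM mulrC.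
Qed.

Lemma repr_ext {m n} (f g : K -> 'M[K]_(m, n)) : (forall y, V y -> f y = g y) -> repr f -> repr g.
Proof.
move=> fg [P [d [dV fE]]]; exists P, d; split => // y Vy; by rewrite -fg // fE.
Qed.

Lemma repr_common {m n N} (f : 'I_N -> K -> 'M[K]_(m, n)) :
  (forall k, repr (f k)) ->
  exists S : 'I_N -> 'M[{poly K}]_(m, n), exists d : {poly K},
    (forall y, V y -> d.[y] != 0) /\ forall k y, V y -> f k y = rat_at (S k) d y.
Proof.
move=> H.
have [PD HPD] := choice (fun k => H k).
have [D HD] := choice HPD.
exists (fun k => (\prod_(l < N | l != k) D l) *: PD k), (\prod_(l < N) D l); split.
  move=> y Vy; rewrite horner_prod; apply/prodf_neq0 => l _.
  by have [] := HD l; move/(_ y Vy).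
move=> k y Vy; have [dV fE] := HD k.
rewrite fE // /rat_at ev_scale scalerA horner_prod (bigD1 k) //= horner_prod.
rewrite invfM -mulrA mulVf ?mulr1 //.
by apply/prodf_neq0 => l _; have [] := HD l; move/(_ y Vy).
Qed.
End repr.
Section invder.
Context {K : numFieldType}.

Lemma derivable_mulr' (f g : K -> K) (x : K) :
  derivable f x 1 -> derivable g x 1 -> derivable (fun y => f y * g y) x 1.
Proof. move=> Hf Hg; exact: (derivableM Hf Hg). Qed.

Lemma derivable_cmul (c : K) (g : K -> K) (x : K) :
  derivable g x 1 -> derivable (fun y => c * g y) x 1.
Proof. move=> Hg; exact: (derivable_mulr' (derivable_cst c x 1) Hg). Qed.

Lemma derivable_invr' (f : K -> K) (x : K) :
  f x != 0 -> derivable f x 1 -> derivable (fun y => (f y)^-1) x 1.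
Proof. move=> H1 H2; exact: (derivableV H1 H2). Qed.

Lemma derivable_bsum (I : finType) (h : I -> K -> K) (x : K) :
  (forall i, derivable (h i) x 1) -> derivable (fun y => \sum_i h i y) x 1.
Proof.
move=> H; rewrite (_ : (fun y => _) = \sum_i h i); last by rewrite fct_sumE.
elim/big_ind: _ => //.
by move=> f g df dg; exact: derivableD.
Qed.

Lemma derivable_bprod (I : finType) (h : I -> K -> K) (x : K) :
  (forall i, derivable (h i) x 1) -> derivable (fun y => \prod_i h i y) x 1.
Proof.
move=> H; rewrite (_ : (fun y => _) = \prod_i h i); last first.
  by apply/funext => y; elim/big_rec2: _ => // i a f _ ->.
elim/big_ind: _ => //.
by move=> f g df dg; exact: derivableM.
Qed.

Lemma derivable_det n (F : K -> 'M[K]_n) (x : K) :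
  (forall i j, derivable (fun y => F y i j) x 1) -> derivable (fun y => \det (F y)) x 1.
Proof.
move=> H; apply: derivable_bsum => s.
by apply: derivable_cmul; exact: derivable_bprod.
Qed.

Lemma derivable_adj n (F : K -> 'M[K]_n) (x : K) :
  (forall i j, derivable (fun y => F y i j) x 1) -> derivable (fun y => \adj (F y)) x 1.
Proof.
move=> H; apply/derivable_mxP' => i j.
rewrite (_ : (fun y => _) = fun y => (-1) ^+ (j + i) * \det (row' j (col' i (F y)))); last first.
  by apply/funext => y; rewrite mxE.
apply: derivable_cmul.
apply: derivable_det => a b.
rewrite (_ : (fun y => _) = fun y => F y (lift j a) (lift i b)) //.
by apply/funext => y; rewrite !mxE.
Qed.

Lemma derivable_invmx n (F : K -> 'M[K]_n) (x : K) :
  derivable F x 1 -> (\forall y \near x, F y \in unitmx) ->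
  derivable (fun y => invmx (F y)) x 1.
Proof.
move=> dF Hu; have dFe := (derivable_mxP' F x 1).1 dF.
have Hn : \near x, (\det (F x))^-1 *: \adj (F x) = invmx (F x).
  by near=> y; rewrite /invmx; near: y; apply: filterS Hu => y ->.
apply: (near_eq_derivable Hn).
have dx : \det (F x) != 0.
  by rewrite -unitfE -unitmxE; exact: (nbhs_singleton Hu).
apply/derivable_mxP' => i j.
rewrite (_ : (fun y => _) = fun y => (\det (F y))^-1 * \adj (F y) i j); last first.
  by apply/funext => y; rewrite mxE.
apply: derivable_mulr'.
  exact: derivable_invr' dx (derivable_det dFe).
by have := (derivable_mxP' _ x 1).1 (derivable_adj dFe); apply.
Unshelve. all: by end_near. Qed.

Lemma is_derive_invmx n (F : K -> 'M[K]_n) (x : K) dF :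
  is_derive x 1 F dF -> (\forall y \near x, F y \in unitmx) ->
  is_derive x 1 (fun y => invmx (F y)) (- (invmx (F x) *m dF *m invmx (F x))).
Proof.
move=> HF Hu.
have dF' : derivable F x 1 by exact: ex_derive.
have dI := derivable_invmx dF' Hu.
have HI := derivableP dI.
have H1 := is_derive_mulmx HF HI.
have Hn : \near x, cst (1%:M : 'M[K]_n) x = F x *m invmx (F x).
  by near=> y; rewrite /= mulmxV //; near: y.
have H0 := near_eq_is_derive Hn (is_derive_cst (1%:M : 'M[K]_n) x 1).
have E : dF *m invmx (F x) + F x *m 'D_1 (fun y => invmx (F y)) x = 0.
  by rewrite -(@derive_val _ _ _ _ _ _ _ H1) (@derive_val _ _ _ _ _ _ _ H0).
have ux : F x \in unitmx by exact: (nbhs_singleton Hu).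
apply: DeriveDef => //.
have := congr1 (mulmx (invmx (F x))) E.
rewrite mulmx0 mulmxDr mulKmx // mulmxA => /eqP; rewrite addr_eq0 => /eqP ->.
by rewrite opprK.
Unshelve. all: by end_near. Qed.
End invder.
Section conjcvg.
Context {K : numFieldType}.

Lemma cvg_sum_fun {T : Type} (F : set_system T) {FF : Filter F} (I : finType)
  (h : I -> T -> K) (l : I -> K) :
  (forall i, h i @ F --> l i) -> (fun x => \sum_i h i x) @ F --> \sum_i l i.
Proof.
move=> H; rewrite (_ : (fun x => _) = \sum_i h i); last by rewrite fct_sumE.
elim/big_ind2: _ => //.
  exact: cvg_cst.
by move=> f a g b fa gb; exact: cvgD.
Qed.

Lemma conj_cvg {T : Type} (F : set_system T) {FF : Filter F} {m n p q : nat}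
  (A : 'M[K]_(m, n)) (B : 'M[K]_(p, q)) (f : T -> 'M[K]_(n, p)) L :
  f @ F --> L -> (fun x => A *m f x *m B) @ F --> A *m L *m B.
Proof.
move=> fL; apply/cvg_mxP => i j.
rewrite (_ : (fun x => _) = fun x => \sum_b (\sum_a A i a * f x a b) * B b j); last first.
  apply/funext => x; rewrite mxE; apply: eq_bigr => b _; rewrite mxE //.
rewrite mxE; apply: cvg_sum_fun => b; rewrite mxE.
apply: cvgMr_tmp; apply: cvg_sum_fun => a; apply: cvgMl_tmp.
by move/cvg_mxP : fL; apply.
Qed.
End conjcvg.

Section liealg.
Variables (R : realType) (r : nat).
Local Notation C := (Cplx R).

Lemma series_conj (A : 'M[C]_r) (u : nat -> 'M[C]_r) (B : 'M[C]_r) :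
  series (fun k => A *m u k *m B) = fun N => A *m series u N *m B.
Proof.
apply/funext => N; rewrite /series /=.
by rewrite mulmx_sumr mulmx_suml; apply: eq_bigr => k _.
Qed.

Lemma exp_conj (A X : 'M[C]_r) k : A \in unitmx ->
  (A *m X *m invmx A) ^+ k = A *m X ^+ k *m invmx A.
Proof.
move=> uA; elim: k => [|k IH].
  by rewrite !expr0 -idmxE mulmx1 mulmxV.
rewrite !exprSr IH -!mulmxE.
by rewrite !mulmxA mulmxKV // -!mulmxA.
Qed.

Lemma mxexp_conj (A X : 'M[C]_r) : A \in unitmx ->
  mxexp (A *m X *m invmx A) = A *m mxexp X *m invmx A.
Proof.
move=> uA; rewrite /mxexp.
set u := (fun k : nat => (k`!%:R)^-1 *: X ^+ k).
have -> : (fun k : nat => (k`!%:R)^-1 *: (A *m X *m invmx A) ^+ k) =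
          (fun k => A *m u k *m invmx A).
  by apply/funext => k; rewrite exp_conj // /u -scalemxAr -scalemxAl.
rewrite series_conj.
have [[l Hl]|nH] := pselect (exists l : 'M[C]_r, series u @ \oo --> l).
  rewrite (cvg_lim _ Hl) //.
  by apply: cvg_lim; [exact: norm_hausdorff | exact: (conj_cvg (A:=A) (B:=invmx A) Hl)].
have nH' : ~ exists l : 'M[C]_r, (fun N => A *m series u N *m invmx A) @ \oo --> l.
  move=> [l Hl]; apply: nH; exists (invmx A *m l *m A).
  have H := conj_cvg (A:=invmx A) (B:=A) Hl.
  apply: (@cvg_trans _ ((fun x => invmx A *m (A *m series u x *m invmx A) *m A) @ \oo)); last exact: H.
  apply: near_eq_cvg; near=> N.
  by rewrite !mulmxA mulVmx // mul1mx mulmxKV.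
rewrite /lim /lim_in !getPN.
- have p0 : (point : 'M[C]_r) = 0 by apply/matrixP => a b; rewrite !mxE.
  by rewrite p0 mulmx0 mul0mx.
- by move=> l Hl; apply: nH; exists l.
- by move=> l Hl; apply: nH'; exists l.
Unshelve. all: by end_near. Qed.

Lemma lie_conj (G : set 'M[C]_r) (A X : 'M[C]_r) :
  closed_matrix_group G -> G A -> lie_algebra G X -> lie_algebra G (A *m X *m invmx A).
Proof.
move=> HG GA LX t; rewrite /closed_matrix_group in HG; case: HG => G1 Gu GM GV Gc.
have uA := Gu _ GA.
rewrite scalemxAl scalemxAr mxexp_conj //.
exact: GM _ _ (GM _ _ GA (LX t)) (GV _ GA).
Qed.
End liealg.
Section subsp.
Context {K : numFieldType}.

Lemma is_derive_mxvec {m n} (f : K -> 'M[K]_(m, n)) (x : K) df :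
  is_derive x 1 f df -> is_derive x 1 (fun y => mxvec (f y)) (mxvec df).
Proof.
move=> Hf; apply: is_derive_mxP => i k.
rewrite (ord1 i); case/mxvec_indexP: k => a b.
rewrite (_ : (fun y => _) = fun y => f y a b); last by apply/funext => y; rewrite mxvecE.
rewrite mxvecE; exact: is_derive_mx_entry.
Qed.

Lemma is_derive_tr {n} (f : K -> 'M[K]_n) (x : K) df :
  is_derive x 1 f df -> is_derive x 1 (fun y => \tr (f y)) (\tr df).
Proof.
move=> Hf; rewrite /mxtrace.
apply: is_derive_sumr => i; exact: is_derive_mx_entry.
Qed.

Lemma is_derive_cstmx {m n} (M : 'M[K]_(m, n)) (x : K) :
  is_derive x 1 (fun _ : K => M) 0.
Proof. exact: is_derive_cst. Qed.

Lemma derive_in_sub {m n p} (f : K -> 'M[K]_(m, n)) (B : 'M[K]_(p, m * n)) (x : K) df :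
  (\forall y \near x, (mxvec (f y) <= B)%MS) -> is_derive x 1 f df ->
  (mxvec df <= B)%MS.
Proof.
move=> Hn Hf.
have H1 := is_derive_mulmx (is_derive_mxvec Hf) (is_derive_cstmx (cokermx B) x).
have Hz : \near x, cst (0 : 'rV[K]_(m * n)) x = mxvec (f x) *m cokermx B.
  by apply: filterS Hn => y; rewrite submxE => /eqP ->.
have H0 := near_eq_is_derive Hz (is_derive_cst (0 : 'rV[K]_(m * n)) x 1).
have E := @derive_val _ _ _ _ _ _ _ H1.
rewrite (@derive_val _ _ _ _ _ _ _ H0) mulmx0 addr0 in E.
by rewrite submxE -E.
Qed.
End subsp.
Unset Printing Implicit Defensive.
Lemma rowv_neq0 (R : nzRingType) m (b : 'rV[R]_m) : b != 0 -> exists i, b 0 i != 0.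
Proof.
move=> bnz; apply/existsP; apply: contraNT bnz => /existsPn H.
apply/eqP/matrixP => i j; rewrite (ord1 i) mxE; exact/eqP/negPn/H.
Qed.

Lemma poly_dep (R : idomainType) k : forall m (M : 'M[R]_(m, k)), (k < m)%N ->
  exists a : 'rV[R]_m, a != 0 /\ a *m M = 0.
Proof.
elim: k => [|k IH] m M km.
  exists (const_mx 1); split; last by apply/matrixP => i [].
  apply/eqP => /matrixP /(_ 0 (Ordinal km)); rewrite !mxE => /eqP.
  by rewrite oner_eq0.
case: m M km => [//|m] M km.
set jm := (ord_max : 'I_k.+1).
have [c0|] := boolP [forall i, M i jm == 0].
  have km' : (k < m.+1)%N by apply: ltnW.
  have [a [anz aM]] := IH _ (\matrix_(i, j) M i (lift jm j)) km'.
  exists a; split => //; apply/matrixP => i j; rewrite !mxE.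
  case: (unliftP jm j) => [j'|] ->.
    transitivity ((a *m \matrix_(i, j) M i (lift jm j)) i j'); last by rewrite aM mxE.
    by rewrite mxE; apply: eq_bigr => l _; rewrite mxE.
  by apply: big1 => l _; move/forallP: c0 => /(_ l) /eqP ->; rewrite mulr0.
move/forallPn => [i0]; rewrite /= => Mi0.
have km' : (k < m)%N by [].
set N := \matrix_(i, j) (M i0 jm * M (lift i0 i) (lift jm j) - M (lift i0 i) jm * M i0 (lift jm j)).
have [b [bnz bN]] := IH _ N km'.
pose av := fun i => if unlift i0 i is Some i' then M i0 jm * b 0 i'
               else - \sum_(i' < m) b 0 i' * M (lift i0 i') jm.
exists (\row_i av i).
split.
  have [i' bi'] := rowv_neq0 bnz.
  apply/eqP => /matrixP /(_ 0 (lift i0 i')); rewrite !mxE /av liftK => /eqP.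
  by rewrite mulf_eq0 (negbTE Mi0) (negbTE bi').
apply/matrixP => i j; rewrite !mxE (bigD1_ord i0) //= !mxE /av unlift_none.
rewrite [X in _ + X](eq_bigr (fun i1 => M i0 jm * b 0 i1 * M (lift i0 i1) j)); last by move=> i1 _; rewrite ?mxE liftK.
rewrite mulNr mulr_suml -sumrN -big_split /=.
case: (unliftP jm j) => [j'|] ->.
  transitivity ((b *m N) i j'); last by rewrite bN mxE.
  rewrite mxE; apply: eq_bigr => l _; rewrite !mxE (ord1 i); ring.
by apply: big1 => l _; ring.
Qed.


Section Main.
Variables (R : realType) (r : nat) (G : set 'M[Cplx R]_r)
    (n : nat) (P : 'M[{poly Cplx R}]_r) (q : {poly Cplx R})
    (U : set (Cplx R)) (Psi : Cplx R -> 'M[Cplx R]_r)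
    (x2 : Cplx R) (E2 : 'M[Cplx R]_r).
Local Notation C := (Cplx R).
Hypothesis HG : closed_matrix_group G.
Variable Bm : 'M[C]_(n, r * r).
Hypothesis HB : forall X : 'M[C]_r, lie_algebra G X <-> (mxvec X <= Bm)%MS.
Hypothesis HUq : forall x, U x -> ~~ root q x.
Hypothesis Uop : open U.
Hypothesis HPd : forall x, U x -> derivable Psi x 1.
Hypothesis HPG : forall x, U x -> G (Psi x).
Hypothesis HPsi : forall x, U x -> derive1 Psi x = ratmx P q x *m Psi x.
Hypothesis Ux2 : U x2.
Hypothesis HE2 : lie_algebra G E2.

Definition Vs : set C := fun y => U y /\ y != x2.
Local Notation D := (ratmx P q).
Local Notation Dk' := (Dk (ratmx P q) Psi x2 E2).

Lemma Uop' y : U y -> \forall z \near y, U z.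
Proof. by move=> Uy; apply: open_nbhs_nbhs; split. Qed.

Lemma Vop y : Vs y -> \forall z \near y, Vs z.
Proof.
move=> [Uy yx]; have H1 := Uop' Uy; have H2 := near_neq yx.
by near=> z; split; [near: z; exact: H1 | near: z; exact: H2].
Unshelve. all: by end_near. Qed.

Lemma repr_D : repr Vs D.
Proof.
exists P, q; split => // y [Uy _].
by have := HUq Uy; rewrite /root.
Qed.

Lemma repr_Dk k : repr Vs (Dk' k).
Proof.
elim: k => [|k IH] /=.
  exists (map_mx polyC (Mop Psi x2 E2)), (('X - x2%:P) ^+ 2); split.
    move=> y [_ yx]; rewrite horner_exp hornerXsubC expf_neq0 //.
    by rewrite subr_eq0.
  by move=> y _; rewrite /rat_at ev_C horner_exp hornerXsubC.
apply: repr_add; first exact: (@repr_derive _ Vs Vop _ _ _ IH).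

apply: (@repr_add _ _ _ _ (fun y => Dk' k y *m D y) (fun y => - (D y *m Dk' k y))).
  exact: repr_mul IH repr_D.
apply: repr_opp; exact: repr_mul repr_D IH.
Qed.

Lemma Psi_der x : U x -> is_derive x 1 Psi (D x *m Psi x).
Proof. move=> Ux; have := derivableP (HPd Ux); by rewrite -derive1E HPsi. Qed.

Lemma Psi_unit y : U y -> Psi y \in unitmx.
Proof. by move=> Uy; case: HG => _ Gu _ _ _; apply: Gu; exact: HPG. Qed.

Lemma Psi_unit_near x : U x -> \forall y \near x, Psi y \in unitmx.
Proof. by move=> Ux; apply: filterS (Uop' Ux) => y; exact: Psi_unit. Qed.

Lemma Phi_der x : U x ->
  is_derive x 1 (fun y => invmx (Psi y)) (- (invmx (Psi x) *m D x)).
Proof.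
move=> Ux; have H := is_derive_invmx (Psi_der Ux) (Psi_unit_near Ux).
by rewrite !mulmxA mulmxK // in H; exact: Psi_unit.
Qed.

Lemma Dk_der k x : Vs x -> is_derive x 1 (Dk' k) (derive1 (Dk' k) x).
Proof. move=> Vx; exact: (@repr_is_derive _ Vs Vop _ _ _ (repr_Dk k) x Vx). Qed.

Lemma lie_scale c X : lie_algebra G X -> lie_algebra G (c *: X).
Proof. by move=> /HB H; apply/HB; rewrite linearZ /= scalemx_sub. Qed.

Lemma Dk_lie k : forall y, Vs y -> lie_algebra G (Dk' k y).
Proof.
elim: k => [|k IH] y Vy /=.
  apply: lie_scale; apply: lie_conj => //; apply: HPG; exact: Ux2.
have Uy := Vy.1.
have HZ := is_derive_mulmx (is_derive_mulmx (Phi_der Uy) (Dk_der k Vy)) (Psi_der Uy).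
have EZ : ((- (invmx (Psi y) *m D y) *m Dk' k y +
     invmx (Psi y) *m (Dk' k)^`()%classic y) *m Psi y +
    invmx (Psi y) *m Dk' k y *m (D y *m Psi y)) =
    invmx (Psi y) *m ((Dk' k)^`()%classic y + lie_bracket (Dk' k y) (D y)) *m Psi y.
  rewrite /lie_bracket.
  rewrite !(mulmxDl, mulmxDr, mulNmx, mulmxN, mulmxBl, mulmxBr, mulmxA).
  by rewrite -addrA addrC -addrA.
have HZ' : is_derive y 1 (fun z => invmx (Psi z) *m Dk' k z *m Psi z)
   (invmx (Psi y) *m ((Dk' k)^`()%classic y + lie_bracket (Dk' k y) (D y)) *m Psi y).
  by rewrite -EZ.
have uy := Psi_unit Uy.
have LZ : lie_algebra G (invmx (Psi y) *m ((Dk' k)^`()%classic y + lie_bracket (Dk' k y) (D y)) *m Psi y).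
  apply/HB; apply: (derive_in_sub _ HZ').
  have Hn := Vop Vy.
  near=> z; apply/HB.
  have Vz : Vs z by near: z.
  rewrite -[X in _ *m X](invmxK (Psi z)).
  have GI : G (invmx (Psi z)).
    by case: HG => _ _ _ GV _; apply: GV; apply: HPG; exact: Vz.1.
  exact: (lie_conj HG GI (IH z Vz)).
have := lie_conj HG (HPG Uy) LZ.
move=> H; rewrite !mulmxA (mulmxV uy) mul1mx (mulmxK uy) in H; exact: H.
Unshelve. all: by end_near. Qed.
Lemma W_der (E1 : 'M[C]_r) (k : nat) : forall y, Vs y ->
  (derive1n k (fun z => W2 Psi z E1 x2 E2) y : C) = \tr (Mop Psi y E1 *m Dk' k y).
Proof.
elim: k => [|k IH] y Vy.
  by rewrite derive1n0 /W2 /= -scalemxAr mxtraceZ mulrC.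
have Uy := Vy.1.
rewrite derive1nS derive1E.
have -> : 'D_1 (derive1n k (fun z => W2 Psi z E1 x2 E2)) y =
          'D_1 (fun z => \tr (Psi z *m E1 *m invmx (Psi z) *m Dk' k z)) y.
  apply: near_eq_derive.
  have Hn := Vop Vy; near=> z; rewrite IH //; near: z; exact: Hn.
have HT := is_derive_tr (is_derive_mulmx (is_derive_mulmx (is_derive_mulmx (Psi_der Uy) (is_derive_cstmx E1 y)) (Phi_der Uy)) (Dk_der k Vy)).
rewrite (@derive_val _ _ _ _ _ _ _ HT) /Mop /= /lie_bracket.
have tr1 : \tr (D y *m Psi y *m E1 *m invmx (Psi y) *m Dk' k y) =
   \tr (Psi y *m E1 *m invmx (Psi y) *m Dk' k y *m D y).
  by rewrite -!mulmxA mxtrace_mulC !mulmxA.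
rewrite mulmx0 addr0 !(mulmxDl, mulmxDr, mulNmx, mulmxN, mulmxBl, mulmxBr, mulmxA).
rewrite !(mxtraceD, raddfN) /= tr1.
exact: addrC.
Unshelve. all: by end_near. Qed.
Lemma main_sec : exists alpha : 'I_n.+1 -> {poly C},
    (exists k, alpha k != 0) /\
    forall E1, lie_algebra G E1 ->
    forall x1, U x1 -> x1 != x2 ->
      \sum_(k < n.+1) (alpha k).[x1] *: Dk (ratmx P q) Psi x2 E2 k x1 = 0
      /\ \sum_(k < n.+1) (alpha k).[x1]
            * derive1n k (fun y => W2 Psi y E1 x2 E2) x1 = 0.
Proof.
have [S [d [dV HS]]] := @repr_common _ Vs _ _ _ (fun k : 'I_n.+1 => Dk' k) (fun k => repr_Dk k).
pose Pi := pinvmx Bm.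
pose Mc : 'M[{poly C}]_(n.+1, n) := \matrix_(k, l) ((mxvec (S k) *m map_mx polyC Pi) 0 l).
have [a [anz aM]] := poly_dep Mc (ltnSn n).
exists (fun k => a 0 k); split; first exact: rowv_neq0 anz.
move=> E1 _ x1 Ux1 x1x2; have Vx : Vs x1 by split.
have E : forall k : 'I_n.+1, Dk' k x1 = (d.[x1])^-1 *: ev x1 (S k) by move=> k; exact: HS.
have dx := dV x1 Vx.
have gS : forall k : 'I_n.+1, (mxvec (ev x1 (S k)) <= Bm)%MS.
  move=> k; apply/HB; have := lie_scale (d.[x1]) (Dk_lie k Vx).
  rewrite E scalerA (mulfV dx) scale1r; exact: id.
have Z : \sum_(k < n.+1) (a 0 k).[x1] *: (mxvec (ev x1 (S k)) *m Pi) = 0.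
  apply/matrixP => i l; rewrite (ord1 i) summxE mxE.
  transitivity (((a *m Mc) 0 l).[x1]); last by rewrite aM mxE horner0.
  rewrite mxE horner_sum; apply: eq_bigr => k _.
  rewrite !mxE hornerM; congr (_ * _).
  rewrite horner_sum; apply: eq_bigr => j _; rewrite hornerM [in RHS]mxE hornerC.
  by rewrite /ev -map_mxvec mxE.
have Hs : \sum_(k < n.+1) (a 0 k).[x1] *: ev x1 (S k) = 0.
  apply: (can_inj mxvecK); rewrite linear_sum linear0 /=.
  rewrite (eq_bigr (fun k : 'I_n.+1 => ((a 0 k).[x1] *: (mxvec (ev x1 (S k)) *m Pi)) *m Bm)); last first.
    by move=> k _; rewrite linearZ /= -scalemxAl mulmxKpV.
  by rewrite -mulmx_suml Z mul0mx.
have sum1 : \sum_(k < n.+1) (a 0 k).[x1] *: Dk' k x1 = 0.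
  rewrite (eq_bigr (fun k : 'I_n.+1 => (d.[x1])^-1 *: ((a 0 k).[x1] *: ev x1 (S k)))); last first.
    by move=> k _; rewrite E !scalerA mulrC.
  by rewrite -scaler_sumr Hs scaler0.
split => //.
rewrite (eq_bigr (fun k : 'I_n.+1 => \tr (Mop Psi x1 E1 *m ((a 0 k).[x1] *: Dk' k x1)))); last first.
  by move=> k _; rewrite W_der // -scalemxAr mxtraceZ.
by rewrite -raddf_sum /= -mulmx_sumr sum1 mulmx0 mxtrace0.
Qed.
End Main.

Theorem mainTheorem2 (R : realType) (r : nat) (G : set 'M[Cplx R]_r)
    (n : nat) (P : 'M[{poly Cplx R}]_r) (q : {poly Cplx R})
    (U : set (Cplx R)) (Psi : Cplx R -> 'M[Cplx R]_r)
    (x2 : Cplx R) (E2 : 'M[Cplx R]_r) :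
  (* G : complex reductive Lie group in GL(r,C), with Lie algebra g, dim g = n *)
  complex_reductive_matrix_group G ->
  lie_dim G n ->
  (* D = P/q rational, with values in g away from its poles *)
  q != 0 ->
  (forall x, ~~ root q x -> lie_algebra G (ratmx P q x)) ->
  (* U simply connected domain avoiding the poles of D *)
  simply_connected_domain U ->
  (forall x, U x -> ~~ root q x) ->
  (* Psi : holomorphic G-valued solution of Psi' = D Psi on U *)
  (forall x, U x -> derivable Psi x 1) ->
  (forall x, U x -> G (Psi x)) ->
  (forall x, U x -> derive1 Psi x = ratmx P q x *m Psi x) ->
  (* the data X2 = x2.E2 and E1 *)
  U x2 -> lie_algebra G E2 ->
  exists alpha : 'I_n.+1 -> {poly Cplx R},
    (exists k, alpha k != 0) /\
    forall E1, lie_algebra G E1 ->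
    forall x1, U x1 -> x1 != x2 ->
      \sum_(k < n.+1) (alpha k).[x1] *: Dk (ratmx P q) Psi x2 E2 k x1 = 0
      /\ \sum_(k < n.+1) (alpha k).[x1]
            * derive1n k (fun y => W2 Psi y E1 x2 E2) x1 = 0.
Proof.
move=> [HG _] [Bm [_ HB]] _ _ [Uop _ _] HUq HPd HPG HPsi Ux2 HE2.
exact: (main_sec HG HB HUq Uop HPd HPG HPsi Ux2 HE2).
Qed.
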